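(* Fix an integer $\alpha\ge2$, an integer $\Delta\ge3$, and parameters $\beta_\mu>\beta_\nu\ge\frac{\Delta-2}{\Delta}$ with $(\beta_\nu/\beta_\mu)^\alpha\beta_\mu<\frac{\Delta-2}{\Delta}$. There exists a constant $C'=C'(\Delta,\alpha,\beta_\nu,\beta_\mu)$ such that for every $\Delta$-regular graph $G=(V,E)$, with $\nu,\mu$ the Gibbs distributions of $(G,\beta_\nu)$ and $(G,\beta_\mu)$, $$\frac1{C'}\sum_{\sigma\in\{-1,+1\}^V}\mu(\sigma)\left(\frac{\nu(\sigma)}{\mu(\sigma)}+1\right)^\alpha\ \le\ D_{\chi^\alpha}(\nu\|\mu)\ \le\ C'\sum_{\sigma\in\{-1,+1\}^V}\mu(\sigma)\left(\frac{\nu(\sigma)}{\mu(\sigma)}+1\right)^\alpha.$$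
   Context: For a graph $G=(V,E)$ and $\gamma>0$, the Ising model $(G,\gamma)$ has Gibbs distribution on $\{-1,+1\}^V$ given by $\pi(\sigma)\propto\gamma^{m(\sigma)}$, where $m(\sigma)=|\{\{u,v\}\in E:\sigma_u=\sigma_v\}|$. The $\chi^\alpha$-divergence is $D_{\chi^\alpha}(\nu\|\mu)=\sum_\sigma\mu(\sigma)\cdot\frac12\left|\frac{\nu(\sigma)}{\mu(\sigma)}-1\right|^\alpha$. *)

(* Defs.v *)
From mathcomp Require Import all_boot all_order all_algebra.
From mathcomp Require Import reals.
Set Implicit Arguments. Unset Strict Implicit. Unset Printing Implicit Defensive.
Import Order.TTheory GRing.Theory Num.Theory.
Local Open Scope ring_scope.

Definition simple_graph (V : finType) (e : rel V) : Prop :=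
  symmetric e /\ irreflexive e.

Definition regular (V : finType) (e : rel V) (D : nat) : Prop :=
  forall x : V, #|[set y | e x y]| = D.

Definition edgeset (V : finType) (e : rel V) : {set {set V}} :=
  [set [set p.1; p.2] | p in [set p : V * V | e p.1 p.2]].

(* Spin configurations sigma : V -> {-1,+1}, with true = +1, false = -1. *)
Definition config (V : finType) := {ffun V -> bool}.

Definition mono (V : finType) (e : rel V) (s : config V) : nat :=
  #|[set E in edgeset e | [forall x in E, forall y in E, s x == s y]]|.

Definition partition_fn (R : realType) (V : finType) (e : rel V) (g : R) : R :=
  \sum_(t : config V) g ^+ mono e t.

Definition gibbs (R : realType) (V : finType) (e : rel V) (g : R)
  (s : config V) : R :=
  g ^+ mono e s / partition_fn e g.

Definition chi_div (R : realType) (V : finType) (a : nat)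
  (nu mu : config V -> R) : R :=
  \sum_(s : config V) mu s * (2^-1 * `|nu s / mu s - 1| ^+ a).

Definition plus_moment (R : realType) (V : finType) (a : nat)
  (nu mu : config V -> R) : R :=
  \sum_(s : config V) mu s * (nu s / mu s + 1) ^+ a.

(* Main.v *)
Require Import Defs.
From mathcomp Require Import all_boot all_order all_algebra.
From mathcomp Require Import reals.
From mathcomp Require Import ring lra zify.
Import Order.TTheory GRing.Theory Num.Theory.
Set Implicit Arguments. Unset Strict Implicit. Unset Printing Implicit Defensive.

Section Comb.
Variables (V : finType) (e : rel V).

Definition flip (v : V) (s : config V) : config V :=
  [ffun x => if x == v then ~~ s x else s x].

Definition tt_ (s : config V) x y : nat := (e x y && (s x == s y)).
Definition Aeq (s : config V) x : nat := \sum_y tt_ s x y.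
Definition Mtot (s : config V) : nat := \sum_x Aeq s x.

Lemma flipK v : involutive (flip v).
Proof. by move=> s; apply/ffunP => x; rewrite !ffunE; case: eqP => // _; rewrite negbK. Qed.

Lemma flipC u v s : flip u (flip v s) = flip v (flip u s).
Proof. by apply/ffunP => x; rewrite !ffunE; case: (x == u); case: (x == v). Qed.

Lemma sum_eq1 (F : V -> nat) v : \sum_x (x == v) * F x = F v.
Proof.
rewrite (bigD1 v) //= eqxx mul1n big1 ?addn0 // => x /negbTE ->; by rewrite mul0n.
Qed.

Lemma sum_card (P : pred V) : \sum_x (P x : nat) = #|[set x | P x]|.
Proof.
rewrite -sum1dep_card [in RHS]big_mkcond /=; apply: eq_bigr => x _; by case: (P x).
Qed.

Lemma dsum_split (G' G : V -> V -> nat) v :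
  \sum_x \sum_y (G' x y + ((x == v) + (y == v)) * G x y)
  = \sum_x \sum_y G' x y + \sum_y G v y + \sum_x G x v.
Proof.
rewrite (eq_bigr (fun x => \sum_y G' x y + (x == v) * \sum_y G x y + G x v)).
  by rewrite !big_split /= sum_eq1.
move=> x _; rewrite !big_split /= big_distrr /=.
rewrite -[G x v](sum_eq1 (G x)) -!big_split /=.
by apply: eq_bigr => y _; rewrite !mulnDl addnA.
Qed.

Hypothesis hsg : simple_graph e.

Lemma Aeq_le D s v : regular e D -> Aeq s v + \sum_y (e v y && (s v != s y)) = D.
Proof.
move=> hr; rewrite /Aeq /tt_ -big_split /= -(hr v) -sum_card.
apply: eq_bigr => y _; case: (e v y) => //=; by case: (s v == s y).
Qed.

Lemma flipM D s v : regular e D -> (Mtot (flip v s) + 4 * Aeq s v = Mtot s + 2 * D)%N.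
Proof.
move=> hr; case: hsg => hsym hirr.
have key : forall x y, (tt_ (flip v s) x y + ((x == v) + (y == v)) * tt_ s x y
   = tt_ s x y + ((x == v) + (y == v)) * (e x y && (s x != s y)))%N.
  move=> x y; rewrite /tt_ !ffunE.
  case: (eqVneq x v) => [->|hx]; case: (eqVneq y v) => [->|hy];
    rewrite ?hirr ?eqxx //=.
  - by case: (e v y); case: (s v); case: (s y).
  - by case: (e x v); case: (s v); case: (s x).
have : \sum_x \sum_y (tt_ (flip v s) x y + ((x == v) + (y == v)) * tt_ s x y)%N
   = \sum_x \sum_y (tt_ s x y + ((x == v) + (y == v)) * (e x y && (s x != s y)))%N.
  by apply: eq_bigr => x _; apply: eq_bigr => y _; exact: key.
rewrite !dsum_split.
have h1 : \sum_x tt_ s x v = Aeq s v.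
  by apply: eq_bigr => x _; rewrite /tt_ hsym eq_sym.
have h2 : \sum_x (e x v && (s x != s v) : nat) = \sum_y (e v y && (s v != s y)).
  by apply: eq_bigr => x _; rewrite hsym eq_sym.
rewrite h1 h2 -/(Mtot _) -/(Mtot _).
have h3 : forall s', \sum_x \sum_y tt_ s' x y = Mtot s' by [].
rewrite -/(Aeq s v).
have := Aeq_le s v hr. lia.
Qed.

Lemma Aeq_leD D s v : regular e D -> (Aeq s v <= D)%N.
Proof. move=> hr; have := Aeq_le s v hr; lia. Qed.

Lemma flipA s u v : e v u -> (Aeq (flip u s) v + (s u == s v) = Aeq s v + (s u != s v))%N.
Proof.
move=> hvu; case: hsg => hsym hirr.
have huv : v != u by apply/eqP => h; move: hvu; rewrite h hirr.
rewrite /Aeq (bigD1 u) //= [in RHS](bigD1 u) //=.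
have -> : \sum_(i | i != u) tt_ (flip u s) v i = \sum_(i | i != u) tt_ s v i.
  apply: eq_bigr => y hy; by rewrite /tt_ !ffunE (negbTE hy) (negbTE huv).
rewrite /tt_ !ffunE eqxx (negbTE huv) hvu /=.
case: (s u); case: (s v) => /=; lia.
Qed.

Lemma set2_eq (a b c d : V) : a != b -> [set a; b] = [set c; d] ->
  (c = a /\ d = b) \/ (c = b /\ d = a).
Proof.
move=> hab H.
have ha : a \in [set c; d] by rewrite -H set21.
have hb : b \in [set c; d] by rewrite -H set22.
move: ha hb; rewrite !inE.
case/orP => /eqP ha; case/orP => /eqP hb; subst.
- by move: hab; rewrite eqxx.
- by left.
- by right.
- by move: hab; rewrite eqxx.
Qed.

Lemma mono2 s : (mono e s * 2 = Mtot s)%N.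
Proof.
case: hsg => hsym hirr.
pose P := [set p : V * V | e p.1 p.2 && (s p.1 == s p.2)].
pose f := fun p : V * V => [set p.1; p.2].
have hM : Mtot s = #|P|.
  rewrite /Mtot /Aeq pair_big /= -sum1_card [RHS]big_mkcond /=.
  by apply: eq_bigr => p _; rewrite /P inE /tt_; case: (_ && _).
have hm : mono e s = #|f @: P|.
  rewrite /mono; apply: eq_card => E; rewrite inE.
  apply/andP/imsetP.
  - case => /imsetP [p]; rewrite inE => hp -> /forallP H.
    have := H p.1; rewrite set21 /= => /forallP/(_ p.2); rewrite set22 /= => heq.
    by exists p; rewrite // inE hp heq.
  - case => p; rewrite inE => /andP[hp heq] ->; split.
      by apply/imsetP; exists p; rewrite ?inE.
    apply/forallP => x; apply/implyP; rewrite !inE => /orP[]/eqP ->;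
    apply/forallP => y; apply/implyP; rewrite !inE => /orP[]/eqP->;
    by rewrite ?eqxx // eq_sym.
rewrite hM hm -[#|P|]sum1_card (partition_big_imset f) /= -sum_nat_const.
apply: eq_bigr => E /imsetP [p0 hp0 ->].
have hne : p0.1 != p0.2 by apply/eqP => h; move: hp0; rewrite inE h hirr.
rewrite (eq_bigl (fun p => p \in [set p0; (p0.2, p0.1)])).
  by rewrite sum1_card cards2; case: p0 hne {hp0} => x y /= hne; rewrite xpair_eqE (negbTE hne).
move=> p /=; rewrite !inE.
apply/andP/orP.
- case => hp /eqP /esym /(set2_eq hne) [[h1 h2]|[h1 h2]].
    by left; apply/eqP; case: p h1 h2 {hp} => x y /= -> ->; case: p0 {hne hp0}.
  by right; apply/eqP; case: p h1 h2 {hp} => x y /= -> ->.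
- move: hp0; rewrite inE => /andP[h1 h2].
  case => /eqP ->; split => //.
  + by rewrite h1 h2.
  + by rewrite /= hsym h1 eq_sym h2.
  + by rewrite /f /= setUC.
Qed.
End Comb.


Section F.
Variables (V : finType) (e : rel V) (D : nat).
Hypotheses (hsg : simple_graph e) (hr : regular e D).

Lemma F1 s v : (mono e (flip v s) <= mono e s + D)%N /\ (mono e s <= mono e (flip v s) + D)%N.
Proof.
have h1 := flipM hsg s v hr; have h2 := mono2 hsg s; have h3 := mono2 hsg (flip v s).
have h4 := Aeq_leD s v hr. lia.
Qed.

Lemma F2 s u v : e v u ->
  mono e (flip v s) != mono e s \/ mono e (flip v (flip u s)) != mono e (flip u s).
Proof.
move=> hvu.
have h1 := flipM hsg s v hr; have h2 := mono2 hsg s; have h3 := mono2 hsg (flip v s).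
have h1' := flipM hsg (flip u s) v hr; have h2' := mono2 hsg (flip u s).
have h3' := mono2 hsg (flip v (flip u s)).
have hA := flipA hsg s hvu.
case: (eqVneq (mono e (flip v s)) (mono e s)) => hm; last by left.
right; apply/eqP => hm'.
move: hA; case: (s u == s v) => /=; lia.
Qed.
Definition near2 s t := (mono e t <= mono e s + 2 * D)%N /\ (mono e s <= mono e t + 2 * D)%N.

Lemma near_s s : near2 s s.
Proof. rewrite /near2; lia. Qed.
Lemma near_v s v : near2 s (flip v s).
Proof. have := F1 s v; rewrite /near2; lia. Qed.
Lemma near_vu s u v : near2 s (flip v (flip u s)).
Proof. have := F1 s u; have := F1 (flip u s) v; rewrite /near2; lia. Qed.
End F.

Local Open Scope ring_scope.
Section An.
Variable R : realType.

Lemma L_eps (q K : R) (m1 m2 : nat) : 0 < q -> q < 1 -> 0 < K -> m1 != m2 ->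
  (1 - q) / 2 <= `|q ^+ m1 * K - 1| \/ (1 - q) / 2 <= `|q ^+ m2 * K - 1|.
Proof.
move=> q0 q1 K0.
wlog lt12 : m1 m2 / (m1 < m2)%N.
  move=> H hne; case: (ltngtP m1 m2) => h.
  - exact: H h hne.
  - by have := H m2 m1 h; rewrite eq_sym => /(_ hne) [?|?]; [right|left].
  - by move: hne; rewrite h eqxx.
move=> _.
have hx : 0 <= q ^+ m1 * K by rewrite mulr_ge0 ?exprn_ge0 ?ltW.
have hy : q ^+ m2 * K <= q * (q ^+ m1 * K).
  have -> : m2 = (m1 + (m2 - m1))%N by lia.
  have hq : q ^+ (m2 - m1) <= q by apply: ler_iXnr; [lia|exact: ltW|exact: ltW].
  by rewrite exprD mulrAC [q * _]mulrC; apply: ler_wpM2l.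
case: (lerP ((1 - q) / 2) `|q ^+ m1 * K - 1|) => h1; first by left.
case: (lerP ((1 - q) / 2) `|q ^+ m2 * K - 1|) => h2; first by right.
exfalso; move: h1 h2 => /ltr_normlP [h1 h1'] /ltr_normlP [h2 h2'].
set x := q ^+ m1 * K in hx hy h1 h1'; set y := q ^+ m2 * K in hy h2 h2'.
have : q * x < q * (1 + (1 - q) / 2) by rewrite ltr_pM2l //; lra.
nra.
Qed.

Definition rhoo (b : R) := if b <= 1 then b else b^-1.

Lemma L_rho (b : R) (m m' k : nat) : 0 < b -> (m <= m' + k)%N -> (m' <= m + k)%N ->
  rhoo b ^+ k * b ^+ m <= b ^+ m'.
Proof.
move=> b0 h1 h2; rewrite /rhoo; case: ifP => hb.
  by rewrite -exprD addnC ler_wiXn2l // ltW.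
have hb1 : 1 <= b by rewrite leNgt; move: hb => /negbT; rewrite -ltNge => /ltW; rewrite leNgt.
rewrite exprVn ler_pdivrMl ?exprn_gt0 // -exprD ler_weXn2l //; lia.
Qed.

Lemma L_pt (r : R) (a : nat) : 0 <= r -> (r + 1) ^+ a <= 3 ^+ a * (1 + `|r - 1| ^+ a).
Proof.
move=> r0; case: (lerP r 2) => hr.
  rewrite mulrDr mulr1 -[X in X <= _]addr0 lerD ?mulr_ge0 ?exprn_ge0 //.
  by apply: lerXn2r; rewrite ?nnegrE; lra.
rewrite mulrDr mulr1 -[X in X <= _]add0r lerD ?exprn_ge0 // -exprMn.
apply: lerXn2r; rewrite ?nnegrE ?mulr_ge0 //; try lra.
have := ler_norm (r - 1); lra.
Qed.

Lemma L_div (x y z w : R) : w != 0 -> z != 0 -> y != 0 ->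
  x / w / (y / z) = x / y * (z / w).
Proof. by move=> hw hz hy; field; rewrite hw hz hy. Qed.

Lemma L4a (x a b c d : R) : x <= a -> 0 <= d -> 0 <= c -> 0 <= b -> 0 <= a -> x <= a + b + c + d.
Proof. move=> *; lra. Qed.
Lemma L4b (x a b c d : R) : x <= b -> 0 <= d -> 0 <= c -> 0 <= b -> 0 <= a -> x <= a + b + c + d.
Proof. move=> *; lra. Qed.
Lemma L4c (x a b c d : R) : x <= c -> 0 <= d -> 0 <= c -> 0 <= b -> 0 <= a -> x <= a + b + c + d.
Proof. move=> *; lra. Qed.
Lemma L4d (x a b c d : R) : x <= d -> 0 <= d -> 0 <= c -> 0 <= b -> 0 <= a -> x <= a + b + c + d.
Proof. move=> *; lra. Qed.

Lemma L_up (r : R) (a : nat) : 0 <= r -> `|r - 1| ^+ a <= (r + 1) ^+ a.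
Proof.
move=> r0; apply: lerXn2r; rewrite ?nnegrE //; first lra.
apply/ler_normlP; split; lra.
Qed.
End An.

Unset Implicit Arguments.

Theorem corollary7p3 (R : realType) (a D : nat) (bnu bmu : R) :
  (2 <= a)%N -> (3 <= D)%N ->
  (D%:R - 2) / D%:R <= bnu -> bnu < bmu ->
  (bnu / bmu) ^+ a * bmu < (D%:R - 2) / D%:R ->
  exists C : R, 0 < C /\
    forall (V : finType) (e : rel V),
      (0 < #|V|)%N -> simple_graph e -> regular e D ->
      let nu := gibbs e bnu in
      let mu := gibbs e bmu in
      C^-1 * plus_moment a nu mu <= chi_div a nu mu /\
      chi_div a nu mu <= C * plus_moment a nu mu.
Proof.
move=> ha hD hnu hlt hcond.
have hD3 : (3 : R) <= D%:R by rewrite (ler_nat R 3 D).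
have hpos : 0 < (D%:R - 2) / D%:R :> R by rewrite divr_gt0 //; lra.
have bnu0 : 0 < bnu by lra.
have bmu0 : 0 < bmu by lra.
set q := bnu / bmu.
have q0 : 0 < q by rewrite divr_gt0.
have q1 : q < 1 by rewrite /q ltr_pdivrMr // mul1r.
set eps := (1 - q) / 2.
have eps0 : 0 < eps by rewrite /eps divr_gt0 //; lra.
set rho := rhoo bmu.
have rho0 : 0 < rho by rewrite /rho /rhoo; case: ifP => _ //; rewrite invr_gt0.
set c0 := eps ^+ a * rho ^+ (2 * D).
have c00 : 0 < c0 by rewrite /c0 mulr_gt0 // exprn_gt0.
set C := 3 ^+ a * (8 / c0 + 2).
have C1 : 1 <= C.
  have h3 : (1 : R) <= 3 ^+ a by rewrite exprn_ege1 //; lra.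
  have h8 : 0 <= 8 / c0 :> R by rewrite divr_ge0 // ltW.
  rewrite /C; nra.
exists C; split; first lra.
move=> V e hV hsg hreg nu mu.
case/card_gt0P: hV => v0 _.
have : (0 < #|[set y | e v0 y]|)%N by rewrite hreg; lia.
case/card_gt0P => u0; rewrite inE => hvu.
have Zpos : forall g : R, 0 < g -> 0 < partition_fn e g.
  move=> g g0; apply: (lt_le_trans (exprn_gt0 (mono e [ffun=> true]) g0)).
  rewrite /partition_fn (bigD1 [ffun=> true]) //= lerDl sumr_ge0 // => t _.
  exact: exprn_ge0 (ltW g0).
set Zm := partition_fn e bmu.
set Zn := partition_fn e bnu.
have Zm0 : 0 < Zm by exact: Zpos.
have Zn0 : 0 < Zn by exact: Zpos.
have hmu0 : forall s, 0 < mu s.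
  by move=> s; rewrite /mu /gibbs divr_gt0 // exprn_gt0.
have hnu0 : forall s, 0 < nu s.
  by move=> s; rewrite /nu /gibbs divr_gt0 // exprn_gt0.
have hsum : \sum_s mu s = 1.
  by rewrite /mu /gibbs -mulr_suml -/(partition_fn e bmu) -/Zm divff // gt_eqF.
set K := Zm / Zn.
have K0 : 0 < K by rewrite divr_gt0.
have hr : forall s, nu s / mu s = q ^+ mono e s * K.
  move=> s; rewrite /nu /mu /gibbs /q /K expr_div_n -/Zm -/Zn.
  have : bmu ^+ mono e s != 0 by rewrite gt_eqF // exprn_gt0.
  have : Zm != 0 by rewrite gt_eqF.
  have : Zn != 0 by rewrite gt_eqF.
  move=> *; exact: L_div.
pose g := fun s => mu s * `|nu s / mu s - 1| ^+ a.
have hg0 : forall s, 0 <= g s.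
  by move=> s; rewrite /g mulr_ge0 ?exprn_ge0 // ltW.
have hchi : chi_div a nu mu = 2^-1 * \sum_s g s.
  by rewrite /chi_div mulr_sumr; apply: eq_bigr => s _; rewrite /g mulrCA.
have hlow : forall s t, near2 e D s t ->
    eps <= `|nu t / mu t - 1| -> c0 * mu s <= g t.
  move=> s t [h1 h2] he.
  have hm : rho ^+ (2 * D) * mu s <= mu t.
    by rewrite /mu /gibbs mulrA ler_pM2r ?invr_gt0 //; exact: L_rho.
  have hx : eps ^+ a <= `|nu t / mu t - 1| ^+ a.
    apply: lerXn2r => //; rewrite nnegrE; [exact: ltW | exact: normr_ge0].
  rewrite /c0 /g -mulrA mulrC; apply: ler_pM hm hx;
    [apply: mulr_ge0; [apply: exprn_ge0; exact: ltW | exact: ltW] | apply: exprn_ge0; exact: ltW].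
have hpt : forall s, c0 * mu s <= g s + g (flip v0 s) + g (flip u0 s) + g (flip v0 (flip u0 s)).
  move=> s.
  have := hg0 s; have := hg0 (flip v0 s); have := hg0 (flip u0 s);
  have := hg0 (flip v0 (flip u0 s)).
  case: (F2 hsg hreg s hvu) => hne.
  - case: (L_eps q0 q1 K0 hne) => he; rewrite -hr in he.
    + have := hlow s (flip v0 s) (near_v hsg hreg s v0) he; exact: L4b.
    + have := hlow s s (near_s e D s) he; exact: L4a.
  - case: (L_eps q0 q1 K0 hne) => he; rewrite -hr in he.
    + have := hlow s (flip v0 (flip u0 s)) (near_vu hsg hreg s u0 v0) he; exact: L4d.
    + have := hlow s (flip u0 s) (near_v hsg hreg s u0) he; exact: L4c.
have hre : forall h : config V -> config V, injective h -> \sum_s g (h s) = \sum_s g s.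
  by move=> h hi; rewrite [RHS](reindex_inj hi).
have hc : c0 <= 4 * \sum_s g s.
  have -> : c0 = \sum_s c0 * mu s by rewrite -mulr_sumr hsum mulr1.
  have -> : 4 * \sum_s g s = \sum_s (g s + g (flip v0 s) + g (flip u0 s) + g (flip v0 (flip u0 s))).
    rewrite !big_split /= (hre _ (can_inj (flipK v0))) (hre _ (can_inj (flipK u0))).
    rewrite (hre (fun s => flip v0 (flip u0 s))); first ring.
    by move=> x y /(can_inj (flipK v0)) /(can_inj (flipK u0)).
  by apply: ler_sum => s _; exact: hpt.
have hplus : plus_moment a nu mu <= 3 ^+ a * (1 + \sum_s g s).
  apply: (@le_trans _ _ (\sum_s (3 ^+ a * mu s + 3 ^+ a * g s))); last first.
    by rewrite big_split /= -!mulr_sumr hsum mulrDr mulr1.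
  apply: ler_sum => s _.
  have := L_pt a (divr_ge0 (ltW (hnu0 s)) (ltW (hmu0 s))) => h.
  apply: le_trans (ler_wpM2l (ltW (hmu0 s)) h) _.
  by rewrite /g le_eqVlt; apply/orP; left; apply/eqP; ring.
have hup : chi_div a nu mu <= C * plus_moment a nu mu.
  rewrite /chi_div /plus_moment mulr_sumr; apply: ler_sum => s _.
  have h := L_up a (divr_ge0 (ltW (hnu0 s)) (ltW (hmu0 s))).
  have h' := ler_wpM2l (ltW (hmu0 s)) h.
  have h0 : 0 <= mu s * `|nu s / mu s - 1| ^+ a by exact: hg0.
  rewrite mulrCA; nra.
split => //.
rewrite ler_pdivrMl; last lra.
set X := 8 * chi_div a nu mu / c0.
have hX : 1 <= X by rewrite /X ler_pdivlMr // mul1r; lra.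
have -> : C * chi_div a nu mu = 3 ^+ a * (X + 2 * chi_div a nu mu).
  by rewrite /C /X; ring.
apply: le_trans hplus _; apply: ler_wpM2l; first by rewrite exprn_ge0.
lra.
Qed.
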